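(* Let $n\ge i\ge0$ and $I\subseteq[n]$ with $|I|=i$. Then $\mathrm{UL}_I={}^{w_I}L_i\cap\mathrm{UT}_n$, $\mathrm{UR}_I={}^{w_I}R_i\cap\mathrm{UT}_n$, and $\mathrm{UP}_I={}^{w_I}P_i\cap\mathrm{UT}_n$.
   Context: Fix the finite field $\mathbb{F}_q$; $[n]=\{1,\dots,n\}$, $[i]^c=[n]\setminus[i]$, $I^c=[n]\setminus I$. $\mathrm{GL}_n$ is the group of invertible $n\times n$ matrices over $\mathbb{F}_q$ and $\mathrm{UT}_n$ its unipotent upper triangular subgroup. Subgroups of $\mathrm{GL}_n$: $L_i=\{g:g_{r,s}\ne0\text{ only if }(r,s)\in[i]\times[i]\cup[i]^c\times[i]^c\}$, $R_i=\{g:(g-1_n)_{r,s}\ne0\text{ only if }(r,s)\in[i]\times[i]^c\}$, $P_i=\{g:g_{r,s}=0\text{ whenever }(r,s)\in[i]^c\times[i]\}$. Subgroups of $\mathrm{UT}_n$: $\mathrm{UL}_I=\{g\in\mathrm{UT}_n:(g-1_n)_{r,s}\ne0\text{ only if }(r,s)\in I\times I\cup I^c\times I^c\}$, $\mathrm{UR}_I=\{g\in\mathrm{UT}_n:(g-1_n)_{r,s}\ne0\text{ only if }(r,s)\in I\times I^c\}$, $\mathrm{UP}_I=\{g\in\mathrm{UT}_n:(g-1_n)_{r,s}=0\text{ whenever }(r,s)\in I^c\times I\}$. Writing $I=\{i_1<\dots<i_{|I|}\}$ and $I^c=\{j_1<\dots<j_{n-|I|}\}$, $w_I$ is the permutation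 of $[n]$ with $w_I(k)=i_k$ for $k\le|I|$ and $w_I(|I|+k)=j_k$. For a permutation $w$ and $H\le\mathrm{GL}_n$, ${}^wH=\{P_whP_w^{-1}:h\in H\}$ where $P_w$ is the permutation matrix with $(P_whP_w^{-1})_{w(r),w(s)}=h_{r,s}$. *)

(* Defs.v *)
From HB Require Import structures.
From mathcomp Require Import all_boot all_order all_algebra all_fingroup.
Set Implicit Arguments. Unset Strict Implicit. Unset Printing Implicit Defensive.
Import GRing.Theory.
Local Open Scope ring_scope.

(* Indices: [n] = {1..n} is modelled by 'I_n = {0..n-1};
   [i] = {1..i} becomes {k : 'I_n | k < i}. *)

Section Groups.
Variables (F : finFieldType) (n : nat).
Implicit Types (g : 'M[F]_n) (i : nat) (I : {set 'I_n}).

Definition GLn : {set 'M[F]_n} := [set g : 'M[F]_n | g \in unitmx].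

Definition UTn : {set 'M[F]_n} :=
  [set g : 'M[F]_n | [forall r : 'I_n, forall s : 'I_n,
     ((s < r)%N ==> (g r s == 0)) && ((r == s) ==> (g r s == 1))]].

Definition Lgrp i : {set 'M[F]_n} :=
  [set g : 'M[F]_n in GLn | [forall r : 'I_n, forall s : 'I_n,
     (g r s != 0) ==> (((r < i)%N && (s < i)%N) || (~~ (r < i)%N && ~~ (s < i)%N))]].

Definition Rgrp i : {set 'M[F]_n} :=
  [set g : 'M[F]_n in GLn | [forall r : 'I_n, forall s : 'I_n,
     ((g - 1%:M) r s != 0) ==> ((r < i)%N && ~~ (s < i)%N)]].

Definition Pgrp i : {set 'M[F]_n} :=
  [set g : 'M[F]_n in GLn | [forall r : 'I_n, forall s : 'I_n,
     (~~ (r < i)%N && (s < i)%N) ==> (g r s == 0)]].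

Definition ULgrp I : {set 'M[F]_n} :=
  [set g : 'M[F]_n in UTn | [forall r : 'I_n, forall s : 'I_n,
     ((g - 1%:M) r s != 0) ==> (((r \in I) && (s \in I)) || ((r \notin I) && (s \notin I)))]].

Definition URgrp I : {set 'M[F]_n} :=
  [set g : 'M[F]_n in UTn | [forall r : 'I_n, forall s : 'I_n,
     ((g - 1%:M) r s != 0) ==> ((r \in I) && (s \notin I))]].

Definition UPgrp I : {set 'M[F]_n} :=
  [set g : 'M[F]_n in UTn | [forall r : 'I_n, forall s : 'I_n,
     ((r \notin I) && (s \in I)) ==> ((g - 1%:M) r s == 0)]].

(* {}^w H : the matrix P_w h P_w^{-1} has entry h r s at position (w r, w s). *)
Definition pconj (w : 'S_n) g : 'M[F]_n :=
  \matrix_(a, b) g ((w^-1)%g a) ((w^-1)%g b).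

Definition conjset (w : 'S_n) (H : {set 'M[F]_n}) : {set 'M[F]_n} :=
  [set pconj w h | h in H].

End Groups.

Section wI.
Variables (n : nat) (I : {set 'I_n}).

Definition wI_seq : seq 'I_n := enum I ++ enum (~: I).

Definition wI_fun (k : 'I_n) : 'I_n := nth k wI_seq k.

Lemma wI_seq_size : size wI_seq = n.
Proof.
by rewrite /wI_seq size_cat -!cardE cardsC card_ord.
Qed.

Lemma wI_seq_uniq : uniq wI_seq.
Proof.
rewrite /wI_seq cat_uniq !enum_uniq /= andbT.
apply/hasPn => x; rewrite !mem_enum in_setC => /negbTE ->; by [].
Qed.

Lemma wI_fun_inj : injective wI_fun.
Proof.
move=> j k; rewrite /wI_fun.
have hj : (j < size wI_seq)%N by rewrite wI_seq_size ltn_ord.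
have hk : (k < size wI_seq)%N by rewrite wI_seq_size ltn_ord.
rewrite (set_nth_default j k hk) => /eqP.
rewrite nth_uniq ?wI_seq_uniq // => /eqP h; exact: val_inj.
Qed.

Definition wI : 'S_n := perm wI_fun_inj.

End wI.

(* Main.v *)
Require Import Defs.
From HB Require Import structures.
From mathcomp Require Import all_boot all_order all_algebra all_fingroup.
Import GRing.Theory.
Local Open Scope ring_scope.

Section Aux.
Variables (F : finFieldType) (n : nat) (I : {set 'I_n}).
Local Notation w := (wI I).

Lemma memI k : (w k \in I) = (k < #|I|)%N.
Proof.
rewrite /wI permE /wI_fun /wI_seq nth_cat -cardE.
case: ltnP => hk.
  by rewrite -mem_enum mem_nth // -cardE.
have : (k - #|I| < size (enum (~: I)))%N.
  by rewrite -cardE -(ltn_add2l #|I|) (cardsC I) card_ord subnKC.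
move=> /(mem_nth k); rewrite mem_enum in_setC => /negbTE ->; by [].
Qed.

Lemma memIV r : ((w^-1)%g r < #|I|)%N = (r \in I).
Proof. by rewrite -memI permKV. Qed.

Lemma conj_mem (H : {set 'M[F]_n}) g :
  (g \in conjset w H) = (pconj (w^-1)%g g \in H).
Proof.
apply/imsetP/idP => [[h hH ->]|hH].
  suff -> : pconj (w^-1)%g (pconj w h) = h by [].
  by apply/matrixP => a b; rewrite !mxE invgK !permK.
exists (pconj (w^-1)%g g) => //.
by apply/matrixP => a b; rewrite !mxE invgK !permKV.
Qed.

Lemma pconjE (g : 'M[F]_n) r s : pconj (w^-1)%g g r s = g (w r) (w s).
Proof. by rewrite mxE invgK. Qed.

Lemma subE (g : 'M[F]_n) r s : (g - 1%:M) r s = if r == s then g r s - 1 else g r s.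
Proof. by rewrite !mxE; case: eqP => _; rewrite ?subr0. Qed.

Lemma UT_GL (g : 'M[F]_n) : g \in UTn F n -> pconj (w^-1)%g g \in GLn F n.
Proof.
rewrite inE => /forallP U.
have -> : pconj (w^-1)%g g = row_perm w (col_perm w g).
  by apply/matrixP => a b; rewrite pconjE !mxE.
rewrite inE row_permE col_permE unitmx_mul unitmx_perm unitmx_mul unitmx_perm andbT /=.
rewrite unitmxE -det_tr det_trig.
  rewrite big1 ?unitr1 // => k _; rewrite mxE.
  by have /forallP/(_ k)/andP[_ /implyP /(_ (eqxx _)) /eqP] := U k.
apply/is_trig_mxP => a b ab; rewrite mxE.
by have /forallP/(_ a)/andP[/implyP /(_ ab) /eqP] := U b.
Qed.

End Aux.

Theorem lemma6p5 (F : finFieldType) (n i : nat) (I : {set 'I_n}) :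
  (i <= n)%N -> #|I| = i ->
  [/\ ULgrp F I = conjset (wI I) (Lgrp F n i) :&: UTn F n,
      URgrp F I = conjset (wI I) (Rgrp F n i) :&: UTn F n
    & UPgrp F I = conjset (wI I) (Pgrp F n i) :&: UTn F n].
Proof.
move=> _ <-; split; apply/setP => g; rewrite in_setI conj_mem [X in X = _]in_set;
  (case Ug: (g \in UTn F n); rewrite ?andbF ?andbT //=; rewrite in_set (@UT_GL _ _ I _ Ug) /=).
- apply/idP/idP => /forallP H; apply/forallP => r; apply/forallP => s.
    rewrite pconjE; apply/implyP => nz.
    case: (eqVneq r s) => [->|rs]; first by case: (s < #|I|)%N.
    move: (H (wI I r)) => /forallP/(_ (wI I s)); rewrite subE (inj_eq perm_inj) (negbTE rs).
    by rewrite nz /= !memI.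
  apply/implyP; rewrite subE; case: (eqVneq r s) => [->|rs nz].
    by case: (s \in I).
  have := H ((wI I)^-1 r)%g => /forallP/(_ ((wI I)^-1 s)%g).
  by rewrite pconjE !permKV nz /= !memIV.
- apply/idP/idP => /forallP H; apply/forallP => r; apply/forallP => s.
    move: (H (wI I r)) => /forallP/(_ (wI I s)).
    by rewrite !subE (inj_eq perm_inj) !pconjE !memI.
  have := H ((wI I)^-1 r)%g => /forallP/(_ ((wI I)^-1 s)%g).
  by rewrite !subE (inj_eq perm_inj) !pconjE !permKV !memIV.
- apply/idP/idP => /forallP H; apply/forallP => r; apply/forallP => s.
    apply/implyP => /andP[rI sI].
    have rs : r != s by apply/eqP => e; move: rI; rewrite e sI.
    move: (H (wI I r)) => /forallP/(_ (wI I s)).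
    by rewrite subE (inj_eq perm_inj) (negbTE rs) !memI rI sI pconjE.
  apply/implyP => /andP[rI sI].
  have rs : r != s by apply/eqP => e; move: rI; rewrite e sI.
  have := H ((wI I)^-1 r)%g => /forallP/(_ ((wI I)^-1 s)%g).
  by rewrite subE (negbTE rs) !memIV rI sI pconjE !permKV.
Qed.
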